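(* Let $m\ge1$ be an integer, let $\mathcal{T}$ be the $m\times m$ lower bidiagonal matrix with $1$ on the diagonal and $-1$ on the sub-diagonal, and let $\gamma\in[0,2]$ with $\gamma\ne1$. Put $A_\gamma=(1-\gamma)\mathcal{T}+\gamma I_m$. Then every eigenvalue $\sigma$ of $A_\gamma A_\gamma^\dagger$ can be written as $$\sigma=(1-\gamma)^2+2(1-\gamma)\cos\theta+1=\left(\frac{\sin\theta}{\sin m\theta}\right)^2$$ for some real $\theta\not\equiv0\pmod\pi$ satisfying $(1-\gamma)\sin m\theta+\sin(m+1)\theta=0$. *)

(* Defs.v *)
From HB Require Import structures.
From mathcomp Require Import all_boot all_order all_algebra.
From mathcomp Require Import all_classical all_reals all_analysis.
Set Implicit Arguments. Unset Strict Implicit. Unset Printing Implicit Defensive.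
Import Order.TTheory GRing.Theory Num.Theory.
Local Open Scope ring_scope.

Definition bidiagT (R : ringType) (m : nat) : 'M[R]_m :=
  \matrix_(i < m, j < m)
    (if i == j then 1 else if (i : nat) == (j : nat).+1 then -1 else 0).

Definition Agamma (R : ringType) (m : nat) (g : R) : 'M[R]_m :=
  (1 - g) *: bidiagT R m + g%:M.

(* Main.v *)
Require Import Defs.
From HB Require Import structures.
From mathcomp Require Import all_boot all_order all_algebra.
From mathcomp Require Import all_classical all_reals all_analysis.
From mathcomp Require Import ring lra.
Import Order.TTheory GRing.Theory Num.Theory.
Local Open Scope ring_scope.

Section S.
Context {R : realType}.

Fixpoint rec2 (x d : R) (n : nat) : R * R :=
  match n with 0%N => (d, 1) | n'.+1 => let p := rec2 x d n' in (p.2, 2 * x * p.2 - p.1) end.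
Definition sq (x d : R) n := (rec2 x d n).1.

Lemma sq0 x d : sq x d 0 = d. Proof. by []. Qed.
Lemma sq1 x d : sq x d 1 = 1. Proof. by []. Qed.
Lemma sqS x d n : sq x d n.+2 = 2 * x * sq x d n.+1 - sq x d n.
Proof. by rewrite /sq /=; case: (rec2 x d n). Qed.

Lemma sq_pos y d : 1 <= y -> d <= 1 -> forall n, 1 <= sq y d n.+1 /\ sq y d n <= sq y d n.+1.
Proof.
move=> y1 d1; elim=> [|n [h1 h2]]; first by rewrite sq0 sq1 lexx.
rewrite sqS; split; nra.
Qed.

Lemma sq_neg x d n : sq (-x) (-d) n = (-1) ^+ n.+1 * sq x d n.
Proof.
elim/ltn_ind: n => -[|[|n]] IH; rewrite ?sq0 ?sq1 ?expr1 ?expr2; try lra.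
rewrite !sqS IH // IH // !exprS.
ring.
Qed.

Lemma sq_sin x c t : cos t = x -> forall n,
  sin t * sq x (-c) n = sin (n%:R * t) + c * sin ((n%:R - 1) * t).
Proof.
move=> ct; elim/ltn_ind => -[|[|n]] IH.
- by rewrite sq0 ?mulr0n mul0r sin0 add0r sub0r mulN1r sinN; lra.
- by rewrite sq1 mulr1 mul1r subrr mul0r sin0 mulr0 addr0.
rewrite sqS mulrBr mulrCA IH // IH //.
have E : forall a, sin (a + t) = 2 * cos t * sin a - sin (a - t).
  by move=> a; rewrite sinD sinB; lra.
have -> : n.+2%:R * t = (n.+1%:R * t) + t by rewrite -natr1 mulrDl mul1r.
have -> : (n.+2%:R - 1) * t = n.+1%:R * t by rewrite -natr1 addrK.
have -> : (n.+1%:R - 1) * t = n%:R * t by rewrite -natr1 addrK.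
have F : sin (n.+1%:R * t) = 2 * cos t * sin (n%:R * t) - sin (n%:R * t - t).
  by rewrite -E -natr1 mulrDl mul1r.
rewrite E.
have -> : n.+1%:R * t - t = n%:R * t by rewrite -natr1 mulrDl mul1r addrK.
have -> : (n%:R - 1) * t = n%:R * t - t by rewrite mulrBl mul1r.
rewrite {3}F ct; ring.
Qed.

Lemma sum_delta (m n : nat) (F : nat -> R) :
  \sum_(i < m) F i * ((i:nat) == n)%:R = if (n < m)%N then F n else 0.
Proof.
rewrite -(big_mkord xpredT (fun i => F i * (i == n)%:R)).
elim: m => [|m IH]; first by rewrite big_geq.
rewrite big_nat_recr //= IH.
case: (ltngtP n m) => [h|h|->].
- by rewrite mulr0n mulr0 addr0 ltnS ltnW.
- by rewrite mulr0n mulr0 addr0 ltnS leqNgt h.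
- by rewrite mulr1n mulr1 add0r ltnSn.
Qed.

Lemma sum_delta2 (m n : nat) (F : nat -> R) :
  \sum_(i < m) F i * (n == (i:nat).+1)%:R = if (0 < n)%N && (n.-1 < m)%N then F n.-1 else 0.
Proof.
case: n => [|n] /=.
  by rewrite big1 // => i _; rewrite mulr0.
rewrite -sum_delta; apply: eq_bigr => i _; by rewrite eqSS eq_sym.
Qed.

Lemma Aentry m (g : R) (i k : 'I_m) :
  Agamma m g i k = ((i:nat) == k)%:R - (1 - g) * ((i:nat) == k.+1)%:R.
Proof.
rewrite /Agamma /bidiagT !mxE -val_eqE /=.
case: eqP => [->|ne]; first by rewrite (ltn_eqF (ltnSn _)) !mulr1n !mulr0n; ring.
by case: ((i:nat) == k.+1); rewrite ?mulr0n ?mulr1n; ring.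
Qed.
End S.

Theorem mainTheorem9 (R : realType) (m : nat) (g : R) (sigma : R) :
  (1 <= m)%N -> 0 <= g -> g <= 2 -> g != 1 ->
  eigenvalue (Agamma m g *m (Agamma m g)^T) sigma ->
  exists theta : R,
    sin theta != 0 /\
    sigma = (1 - g) ^+ 2 + 2 * (1 - g) * cos theta + 1 /\
    sigma = (sin theta / sin (m%:R * theta)) ^+ 2 /\
    (1 - g) * sin (m%:R * theta) + sin ((m.+1)%:R * theta) = 0.
Proof.
move=> m1 g0 g2 g1 /eigenvalueP [v Hv v0].
case: m m1 v Hv v0 => // k _ v Hv v0.
pose V n := if (n < k.+1)%N then v ord0 (inord n) else 0.
have vV : forall i : 'I_k.+1, v ord0 i = V i by move=> i; rewrite /V ltn_ord inord_val.
have VA : forall j : 'I_k.+1, (v *m Agamma k.+1 g) ord0 j = V j - (1-g) * V j.+1.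
  move=> j; rewrite mxE.
  under eq_bigr => i _ do rewrite vV Aentry mulrBr mulrCA.
  rewrite sumrB -mulr_sumr !sum_delta ltn_ord.
  by case: ifP => // h; rewrite /V h.
have E : forall j : 'I_k.+1, sigma * V j = (V j - (1-g) * V j.+1) -
   (1 - g) * (if (0 < j)%N then V j.-1 - (1 - g) * V j else 0).
  move=> j; have := congr1 (fun M : 'M[R]_(1,k.+1) => M ord0 j) Hv; rewrite mulmxA !mxE vV => <-.
  under eq_bigr => i _ do rewrite VA mxE Aentry (eq_sym (j:nat)) mulrBr mulrCA.
  rewrite sumrB -mulr_sumr (@sum_delta _ _ _ (fun n => V n - (1-g) * V n.+1)) (@sum_delta2 _ _ _ (fun n => V n - (1-g) * V n.+1)) ltn_ord.
  case: (j:nat) (ltn_ord j) => [|j'] //= lj.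
  by rewrite (ltnW lj).
have Vk : V k.+1 = 0 by rewrite /V ltnn.
have c0 : 1 - g != 0 by rewrite subr_eq0 eq_sym.
have cb1 : -1 <= 1 - g by lra.
have cb2 : 1 - g <= 1 by lra.
move: (1 - g) c0 cb1 cb2 => c c0 cb1 cb2 in E *.
have E0 : sigma * V 0 = V 0 - c * V 1 by have := E ord0; rewrite /= mulr0 subr0.
have En : forall n, (n.+1 < k.+1)%N ->
    sigma * V n.+1 = V n.+1 - c * V n.+2 - c * (V n - c * V n.+1).
  by move=> n h; have := E (Ordinal h).
pose x := (sigma - 1 - c ^+ 2) / (2 * c).
have hx : sigma = 1 + c ^+ 2 + 2 * c * x by rewrite /x mulrC divfK ?mulf_neq0 //; ring.
move: x hx => x hx; subst sigma.
pose a := sq x (-c).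
have P : forall n, (n <= k)%N ->
    (-1) ^+ n * V n = V 0 * a n.+1 /\ (-1) ^+ n.+1 * V n.+1 = V 0 * a n.+2.
  elim => [_|n IH hn].
    split; first by rewrite /a sq1 expr0 mul1r mulr1.
    rewrite /a sqS sq1 sq0 expr1.
    apply/eqP; rewrite -subr_eq0; apply/eqP; apply: (mulfI c0); rewrite mulr0.
    lra.
  have [_ IH2] := IH (ltnW hn); split => //.
  rewrite /a sqS -/a mulrBr mulrCA -IH2.
  have [IH1 _] := IH (ltnW hn); rewrite -IH1.
  have key : c * V n.+2 + 2 * c * x * V n.+1 + c * V n = 0.
    have := En n hn; lra.
  apply/eqP; rewrite -subr_eq0; apply/eqP; apply: (mulfI c0); rewrite mulr0.
  rewrite !exprS.
  transitivity ((-1) * (-1) * ((-1) ^+ n) * (c * V n.+2 + 2 * c * x * V n.+1 + c * V n)); first ring.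
  by rewrite key mulr0.
have V0 : V 0 != 0.
  apply: contra v0 => /eqP h; apply/eqP/rowP => i; rewrite !mxE vV.
  have [+ _] := P i (ltn_ord i); rewrite h mul0r => /eqP.
  by rewrite mulf_eq0 expf_eq0 oppr_eq0 oner_eq0 andbF => /eqP.
have ak : a k.+2 = 0.
  have [_] := P k (leqnn k); rewrite Vk mulr0 => /esym /eqP.
  by rewrite mulf_eq0 (negbTE V0) => /eqP.
have xb : -1 < x < 1.
  case: (ltrP x 1) => [x1|x1]; last first.
    have [h _] := sq_pos x (-c) x1 ltac:(lra) k.+1; move: h; rewrite -/a ak; lra.
  case: (ltrP (-1) x) => [x2|x2]; first by apply/andP.
  have [h _] := sq_pos (-x) c ltac:(lra) cb2 k.+1.
  move: ak; rewrite /a -{1}(opprK x) sq_neg => /eqP; rewrite mulf_eq0 expf_eq0 oppr_eq0 oner_eq0 andbF /=.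
  move=> /eqP h'; move: h; rewrite h'; lra.
have ct : cos (acos x) = x.
  apply: acosK; rewrite in_itv /=; apply/andP; split; lra.
move: (acos x) ct => t ct.
have S2 : sin t ^+ 2 = 1 - x ^+ 2 by rewrite sin2cos2 ct.
have St : sin t != 0.
  apply/eqP => h; move: S2; rewrite h expr0n /=; nra.
have rel : c * sin (k.+1%:R * t) + sin (k.+2%:R * t) = 0.
  have := sq_sin x c t ct k.+2; rewrite -/a ak mulr0.
  have -> : (k.+2%:R - 1 : R) = k.+1%:R by rewrite -natr1 addrK.
  move=> h; rewrite h; ring.
have sD : sin (k.+2%:R * t) = sin (k.+1%:R * t) * x + cos (k.+1%:R * t) * sin t.
  by rewrite -natr1 mulrDl mul1r sinD ct.
have rel0 := rel; move: rel; rewrite sD => rel.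
have sK := cos2Dsin2 (k.+1%:R * t).
set s := sin (k.+1%:R * t) in rel sK rel0 *; set K := cos (k.+1%:R * t) in rel sK *.
have s0 : s != 0.
  apply/eqP => s0; move: rel sK; rewrite s0 !mulr0 mul0r add0r expr0n /= addr0 => /eqP.
  rewrite add0r mulf_eq0 (negbTE St) orbF => /eqP ->; rewrite expr0n /=.
  by move=> /eqP; rewrite eq_sym oner_eq0.
exists t; split => //; split; first by rewrite ct; ring.
split; last by [].

rewrite expr_div_n; apply: (mulIf (expf_neq0 2 s0)); rewrite divfK ?expf_neq0 //.
have cs : c * s = - (s * x + K * sin t) by lra.
transitivity (s ^+ 2 + (c * s) ^+ 2 + 2 * x * s * (c * s)); first ring.
rewrite cs.
transitivity (s ^+ 2 * (1 - x ^+ 2) + sin t ^+ 2 * (K ^+ 2)); first ring.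
rewrite -S2 (_ : K ^+ 2 = 1 - s ^+ 2); last by lra.
ring.
Qed.
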